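(* Let $G$ be a looped simple graph and let $T_1,T_2$ be disjoint transversals of $W(G)$ with $r(T_1)+r(T_2)=|V(G)|$, where $r$ is the rank function of $M[IAS(G)]$. Let $T_3=W(G)\setminus(T_1\cup T_2)$, and for $i\in\{1,2,3\}$ let $M_i$ be the binary matroid on $V(G)$ obtained from $M[IAS(G)]|T_i$ via the bijection $T_i\to V(G)$ sending the element of $T_i$ in the vertex triple of $v$ to $v$. Then $M_1$ and $M_2$ have the same bicycle space, and this bicycle space equals the cycle space of $M_3$.
   Context: A looped simple graph is a finite graph in which each vertex carries at most one loop and no two distinct vertices are joined by more than one edge; ''adjacent'' refers to distinct vertices joined by a non-loop edge. $A(G)$ is the $V(G)\times V(G)$ matrix over $GF(2)$ with diagonal entry $1$ exactly at looped vertices and off-diagonal entry $1$ exactly for adjacent pairs. $IAS(G)=(I\mid A(G)\mid A(G)+I)$ over $GF(2)$, rows indexed by $V(G)$; the $v$-columns of the three blocks are labelled $\phi_G(v),\chi_G(v),\psi_G(v)$. $M[IAS(G)]$ is the binary column matroid of $IAS(G)$ on $W(G)=\{\phi_G(v),\chi_G(v),\psi_G(v):v\in V(G)\}$; the vertex triple of $v$ is $\{\phi_G(v),\chi_G(v),\psi_G(v)\}$, and a transversal contains exactly one element of each vertex triple. For a binary matroid on a set $E$, identify subsets of $E$ with vectors in $GF(2)^E$: the cycle space is the span of the circuits (equivalently, for any $GF(2)$-representation, the set of vectors orthogonal to every row), the cocycle space is the span of the cocircuits (the orthogonal complement of the cycle space), and the bicycle space is the intersection of the cycle space and the cocycle space.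 *)

(* Defs.v *)
From HB Require Import structures.
From mathcomp Require Import all_boot all_order all_algebra.
Set Implicit Arguments. Unset Strict Implicit. Unset Printing Implicit Defensive.
Import GRing.Theory.
Local Open Scope ring_scope.

(* Looped simple graph on vertex set 'I_n: loop marks looped vertices,
   adj is the (symmetric, irreflexive) adjacency relation between distinct
   vertices. *)
Definition looped_simple_graph (n : nat) (loop : pred 'I_n) (adj : rel 'I_n) : Prop :=
  symmetric adj /\ irreflexive adj.

Definition adjmx (n : nat) (loop : pred 'I_n) (adj : rel 'I_n) : 'M['F_2]_n :=
  \matrix_(i, j) (if i == j then (loop i)%:R else (adj i j)%:R).

(* W(G) = V(G) x {phi, chi, psi}; (v,0) = phi(v), (v,1) = chi(v), (v,2) = psi(v). *)
Definition welt (n : nat) := ('I_n * 'I_3)%type.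

Definition ias_col (n : nat) (loop : pred 'I_n) (adj : rel 'I_n) (w : welt n)
  : 'cV['F_2]_n :=
  let A := adjmx loop adj in
  if val w.2 == 0%N then col w.1 (1%:M : 'M['F_2]_n)
  else if val w.2 == 1%N then col w.1 A
  else col w.1 (A + 1%:M).

Definition ias_rank (n : nat) (loop : pred 'I_n) (adj : rel 'I_n) (T : {set welt n})
  : nat :=
  \rank (\sum_(w in T) <<trmx (ias_col loop adj w)>>)%MS.

Definition vtriple (n : nat) (v : 'I_n) : {set welt n} := [set w | w.1 == v].

Definition ias_transversal (n : nat) (T : {set welt n}) : Prop :=
  forall v : 'I_n, #|T :&: vtriple v| = 1%N.

Definition trans_elt (n : nat) (T : {set welt n}) (v : 'I_n) : welt n :=
  odflt (v, ord0) [pick w in T | w.1 == v].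

(* GF(2)-representation of M_T: the binary matroid on V(G) obtained from
   M[IAS(G)]|T via the bijection T -> V(G); column v is the IAS column of
   the element of T in the vertex triple of v. *)
Definition restr_mx (n : nat) (loop : pred 'I_n) (adj : rel 'I_n) (T : {set welt n})
  : 'M['F_2]_n :=
  \matrix_(i, j) ias_col loop adj (trans_elt T j) i ord0.

(* Spaces of the binary matroid represented by R (columns indexed by V),
   subsets of V identified with vectors in GF(2)^V (row vectors). *)
Definition cycle_space (n : nat) (R : 'M['F_2]_n) (x : 'rV['F_2]_n) : Prop :=
  R *m x^T = 0.

Definition cocycle_space (n : nat) (R : 'M['F_2]_n) (y : 'rV['F_2]_n) : Prop :=
  forall x : 'rV['F_2]_n, cycle_space R x -> x *m y^T = 0.

Definition bicycle_space (n : nat) (R : 'M['F_2]_n) (y : 'rV['F_2]_n) : Prop :=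
  cycle_space R y /\ cocycle_space R y.

(* Main.v *)
Require Import Defs.
From HB Require Import structures.
From mathcomp Require Import all_boot all_order all_algebra.
From mathcomp Require Import zify.
Set Implicit Arguments. Unset Strict Implicit.
Import GRing.Theory.
Local Open Scope ring_scope.
Lemma addF2 (z : 'F_2) : z + z = 0.
Proof. case: z => [[|[|[]]] ?] //; apply: val_inj; vm_compute; reflexivity. Qed.
Lemma oppF2 (z : 'F_2) : - z = z.
Proof. case: z => [[|[|[]]] ?] //; apply: val_inj; vm_compute; reflexivity. Qed.
Definition dv (k : 'I_3) : 'F_2 := if val k == 1%N then 0 else 1.
Definition ev (k : 'I_3) : 'F_2 := if val k == 0%N then 0 else 1.
Lemma dev a b : a != b -> dv a * ev b + ev a * dv b = 1.
Proof. case: a b => [[|[|[|a]]] Ha] [[|[|[|b]]] Hb] //= _; apply: val_inj; vm_compute; reflexivity. Qed.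
Lemma dv3 a b c : a != b -> b != c -> a != c -> dv c = dv a + dv b /\ ev c = ev a + ev b.
Proof. case: a b c => [[|[|[|a]]] Ha] [[|[|[|b]]] Hb] [[|[|[|c]]] Hc] //= _ _ _; split; apply: val_inj; vm_compute; reflexivity. Qed.
Lemma third (a b : 'I_3) : exists c : 'I_3, c != a /\ c != b.
Proof.
case: a b => [[|[|[|a]]] Ha] [[|[|[|b]]] Hb] //;
first [ by exists (@Ordinal 3 0 isT) | by exists (@Ordinal 3 1 isT) | by exists (@Ordinal 3 2 isT)].
Qed.

Lemma oppmxF2 m p (M : 'M['F_2]_(m, p)) : - M = M.
Proof. by apply/matrixP => i j; rewrite mxE oppF2. Qed.
Lemma addmxF2 m p (M : 'M['F_2]_(m, p)) : M + M = 0.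
Proof. by apply/matrixP => i j; rewrite !mxE addF2. Qed.

Section Orth.
Variable n : nat.
Variable A : 'M['F_2]_n.
Hypothesis HA : A^T = A.

Lemma orth (dt et ds es : 'rV['F_2]_n) (x y : 'rV['F_2]_n) :
  (forall j, dt 0 j * es 0 j + et 0 j * ds 0 j = 1) ->
  (diag_mx dt + A *m diag_mx et) *m x^T = 0 ->
  (diag_mx ds + A *m diag_mx es) *m y^T = 0 -> x *m y^T = 0.
Proof.
move=> Hj Hx Hy.
have Ex : diag_mx dt *m x^T = A *m diag_mx et *m x^T.
  by move: Hx; rewrite mulmxDl => /eqP; rewrite addr_eq0 oppmxF2 => /eqP.
have Ey : diag_mx ds *m y^T = A *m diag_mx es *m y^T.
  by move: Hy; rewrite mulmxDl => /eqP; rewrite addr_eq0 oppmxF2 => /eqP.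
have I : diag_mx dt *m diag_mx es + diag_mx et *m diag_mx ds = 1%:M.
  rewrite !mulmx_diag -raddfD /= -diag_const_mx; congr diag_mx.
  by apply/matrixP => i j; rewrite !mxE Hj.
have Ex' : x *m diag_mx dt = x *m diag_mx et *m A.
  by rewrite -[LHS]trmxK trmx_mul tr_diag_mx Ex !trmx_mul tr_diag_mx HA trmxK mulmxA.
rewrite -[x]mulmx1 -I mulmxDr mulmxDl !mulmxA Ex' -!mulmxA Ey !mulmxA.
by rewrite addmxF2.
Qed.

Lemma perp (R1 R2 : 'M['F_2]_n) :
  (forall x y : 'rV['F_2]_n, R1 *m x^T = 0 -> R2 *m y^T = 0 -> x *m y^T = 0) ->
  (\rank R1 + \rank R2)%N = n ->
  forall y : 'rV['F_2]_n,
  (forall x : 'rV['F_2]_n, R1 *m x^T = 0 -> x *m y^T = 0) -> R2 *m y^T = 0.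
Proof.
move=> Ho Hr y Hy.
set K1 := kermx R1^T; set K2 := kermx R2^T.
have K1x : forall i, R1 *m (row i K1)^T = 0.
  move=> i; rewrite -[R1]trmxK -trmx_mul -row_mul mulmx_ker row0.
  by apply/matrixP => a b; rewrite !mxE.
have K2x : forall i, R2 *m (row i K2)^T = 0.
  move=> i; rewrite -[R2]trmxK -trmx_mul -row_mul mulmx_ker row0.
  by apply/matrixP => a b; rewrite !mxE.
have S21 : (K2 <= kermx K1^T)%MS.
  apply/sub_kermxP/matrixP => i j.
  have := Ho _ _ (K1x j) (K2x i) => /matrixP /(_ 0 0).
  rewrite !mxE => H; apply: (etrans _ H).
  by apply: eq_bigr => k _; rewrite !mxE mulrC.
have yK : (y <= kermx K1^T)%MS.
  apply/sub_kermxP/matrixP => i j.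
  have := Hy _ (K1x j) => /matrixP /(_ 0 0).
  rewrite !mxE (ord1 i) => H; apply: (etrans _ H).
  by apply: eq_bigr => k _; rewrite !mxE mulrC.
have rk : \rank (kermx K1^T) = \rank K2.
  rewrite /K2 !mxrank_ker !mxrank_tr mxrank_ker mxrank_tr.
  have r1 := rank_leq_row R1; move: Hr; lia.
have S12 : (kermx K1^T <= K2)%MS.
  by have := mxrank_leqif_sup S21 => -[_]; rewrite rk eqxx => <-.
have /sub_kermxP yR : (y <= K2)%MS by apply: submx_trans S12.
by rewrite -[R2]trmxK -trmx_mul yR trmx0.
Qed.
End Orth.

Section Main.
Variable n : nat.
Variable loop : pred 'I_n.
Variable adj : rel 'I_n.
Local Notation A := (adjmx loop adj).

Definition dvec (t : 'I_n -> 'I_3) : 'rV['F_2]_n := \row_j dv (t j).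
Definition evec (t : 'I_n -> 'I_3) : 'rV['F_2]_n := \row_j ev (t j).
Definition Rt t := diag_mx (dvec t) + A *m diag_mx (evec t).

Lemma ias_colE j k i :
  ias_col loop adj (j, k) i ord0 = dv k * (i == j)%:R + ev k * A i j.
Proof.
rewrite /ias_col /=.
case: k => [[|[|[|k]]] Hk] //=; rewrite /dv /ev /= !mxE /=.
- by rewrite mul1r mul0r addr0.
- by rewrite mul0r mul1r add0r.
- by rewrite !mul1r addrC.
Qed.

Lemma te_spec (T : {set welt n}) : ias_transversal T -> forall v,
  trans_elt T v \in T /\ (trans_elt T v).1 = v.
Proof.
move=> HT v; rewrite /trans_elt; case: pickP => [w /andP[wT /eqP] //|none].
have /eqP/cards1P[u Eu] := HT v.
have : u \in T :&: vtriple v by rewrite Eu set11.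
by rewrite !inE none.
Qed.

Lemma te_uniq (T : {set welt n}) : ias_transversal T -> forall w,
  w \in T -> w = trans_elt T w.1.
Proof.
move=> HT w wT; have [tT t1] := te_spec HT w.1.
have /eqP/cards1P[u Eu] := HT w.1.
have : w \in T :&: vtriple w.1 by rewrite !inE wT /=.
have : trans_elt T w.1 \in T :&: vtriple w.1 by rewrite !inE tT t1 /=.
by rewrite Eu !inE => /eqP -> /eqP ->.
Qed.

Definition typ (T : {set welt n}) v := (trans_elt T v).2.

Lemma restrE (T : {set welt n}) : (forall v, (trans_elt T v).1 = v) ->
  restr_mx loop adj T = Rt (typ T).
Proof.
move=> H; apply/matrixP => i j.
rewrite /restr_mx /Rt mul_mx_diag !mxE.
have -> : trans_elt T j = (j, typ T j) by rewrite /typ -{2}(H j) -surjective_pairing.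
rewrite ias_colE /adjmx !mxE; case: eqVneq => [->|ne].
  by rewrite /= mulr1 [_ * ev _]mulrC.
by rewrite mulr0 mulr0n !add0r mulrC.
Qed.

Lemma rowRT (T : {set welt n}) v :
  row v (restr_mx loop adj T)^T = (ias_col loop adj (trans_elt T v))^T.
Proof. by apply/matrixP => a b; rewrite !mxE (ord1 a). Qed.

Lemma rankE (T : {set welt n}) : ias_transversal T ->
  ias_rank loop adj T = \rank (restr_mx loop adj T).
Proof.
move=> HT; rewrite /ias_rank -(mxrank_tr (restr_mx _ _ T)); apply/eqP; rewrite eqn_leq.
apply/andP; split; apply: mxrankS.
  apply/sumsmx_subP => w wT; rewrite genmxE.
  by rewrite {1}(te_uniq HT wT) -rowRT row_sub.
apply/row_subP => v; rewrite rowRT.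
have [tT _] := te_spec HT v.
by apply: (sumsmx_sup (trans_elt T v)); rewrite ?genmxE.
Qed.

Lemma Asym : looped_simple_graph loop adj -> A^T = A.
Proof.
move=> [Hs _]; apply/matrixP => i j; rewrite !mxE eq_sym.
by case: eqVneq => [->|_] //; rewrite Hs.
Qed.

Lemma orthR (t s : 'I_n -> 'I_3) : looped_simple_graph loop adj ->
  (forall v, t v != s v) -> forall x y : 'rV['F_2]_n,
  Rt t *m x^T = 0 -> Rt s *m y^T = 0 -> x *m y^T = 0.
Proof.
move=> HG Hts x y; apply: (@orth _ _ (Asym HG)) => j.
by rewrite !mxE dev.
Qed.

Lemma typ_in (T : {set welt n}) : ias_transversal T -> forall v k,
  (v, k) \in T -> k = typ T v.
Proof. by move=> HT v k vk; rewrite /typ -(te_uniq HT vk). Qed.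

Lemma in_typ (T : {set welt n}) : ias_transversal T -> forall w,
  w.2 = typ T w.1 -> w \in T.
Proof.
move=> HT [v k] /= ->; have [tT t1] := te_spec HT v.
by rewrite /typ -{1}t1 -surjective_pairing.
Qed.

Lemma RtD (t1 t2 t3 : 'I_n -> 'I_3) :
  (forall v, [/\ t1 v != t2 v, t2 v != t3 v & t1 v != t3 v]) ->
  Rt t3 = Rt t1 + Rt t2.
Proof.
move=> H.
have Ed : dvec t3 = dvec t1 + dvec t2.
  apply/matrixP => i j; rewrite !mxE.
  by have [a b c] := H j; have [-> _] := dv3 a b c.
have Ee : evec t3 = evec t1 + evec t2.
  apply/matrixP => i j; rewrite !mxE.
  by have [a b c] := H j; have [_ ->] := dv3 a b c.
rewrite /Rt Ed Ee !raddfD /=.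
by rewrite addrACA.
Qed.
End Main.

Local Close Scope ring_scope.

Theorem corollary5p4 (n : nat) (loop : pred 'I_n) (adj : rel 'I_n)
  (T1 T2 : {set welt n}) :
  looped_simple_graph loop adj ->
  ias_transversal T1 -> ias_transversal T2 -> [disjoint T1 & T2] ->
  (ias_rank loop adj T1 + ias_rank loop adj T2 = n)%N ->
  let T3 := ~: (T1 :|: T2) in
  (forall y : 'rV['F_2]_n,
     bicycle_space (restr_mx loop adj T1) y <-> bicycle_space (restr_mx loop adj T2) y) /\
  (forall y : 'rV['F_2]_n,
     bicycle_space (restr_mx loop adj T1) y <-> cycle_space (restr_mx loop adj T3) y).
Proof.
move=> HG H1 H2 Hdis Hr T3.
rewrite !rankE // in Hr.
set t1 := typ T1; set t2 := typ T2; set t3 := typ T3.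
have ne12 : forall v, t1 v != t2 v.
  move=> v; apply/eqP => E.
  have [i1 _] := te_spec H1 v; have [i2 _] := te_spec H2 v.
  have E' : trans_elt T1 v = trans_elt T2 v.
    have [_ a] := te_spec H1 v; have [_ b] := te_spec H2 v.
    by rewrite [LHS]surjective_pairing [RHS]surjective_pairing a b; congr pair.
  by rewrite -E' (disjointFr Hdis i1) in i2.
have H3 : forall v, (trans_elt T3 v).1 = v /\ t3 v != t1 v /\ t3 v != t2 v.
  move=> v; have [c [c1 c2]] := third (t1 v) (t2 v).
  have cT3 : (v, c) \in T3.
    rewrite !inE; apply/negP => /orP[] /typ_in => [/(_ H1)|/(_ H2)] /= E.
      by rewrite E eqxx in c1.
    by rewrite E eqxx in c2.
  rewrite /t3 /typ /trans_elt; case: pickP => [w /andP[wT3 /eqP w1]|none]; last first.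
    by have := none (v, c); rewrite cT3 /= eqxx.
  rewrite /=; split => //.
  move: wT3; rewrite !inE negb_or => /andP[n1 n2].
  split; apply/eqP => E.
    by move: n1; rewrite (in_typ H1) // E w1.
  by move: n2; rewrite (in_typ H2) // E w1.
have fst1 : forall v, (trans_elt T1 v).1 = v by move=> v; case: (te_spec H1 v).
have fst2 : forall v, (trans_elt T2 v).1 = v by move=> v; case: (te_spec H2 v).
have fst3 : forall v, (trans_elt T3 v).1 = v by move=> v; case: (H3 v).
rewrite (restrE loop adj fst1) (restrE loop adj fst2) (restrE loop adj fst3) in Hr *.
rewrite -/t1 -/t2 -/t3 in Hr *.
have ne21 : forall v, t2 v != t1 v by move=> v; rewrite eq_sym.
have ne13 : forall v, t1 v != t3 v by move=> v; case: (H3 v) => _ [a _]; rewrite eq_sym.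
have ne23 : forall v, t2 v != t3 v by move=> v; case: (H3 v) => _ [_ a]; rewrite eq_sym.
have O12 := orthR HG ne12; have O21 := orthR HG ne21.
have O13 := orthR HG ne13; have O23 := orthR HG ne23.
have P12 := perp O12 Hr.
have P21 := perp O21 (etrans (addnC (\rank (Rt loop adj t2)) _) Hr).
have R3E : Rt loop adj t3 = (Rt loop adj t1 + Rt loop adj t2)%R.
  by apply: RtD => v; split.
rewrite /bicycle_space /cocycle_space /cycle_space R3E.
split => y; split.
- move=> [C1 Co1]; split; first exact: P12.
  by move=> x Cx; apply: O21.
- move=> [C2 Co2]; split; first exact: P21.
  by move=> x Cx; apply: O12.
- by move=> [C1 Co1]; rewrite mulmxDl C1 (P12 _ Co1) addr0.
- move=> C3; rewrite -R3E in C3.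
  have C2 : (Rt loop adj t2 *m y^T)%R = 0%R.
    by apply: P12 => x Cx; apply: O13.
  have C1 : (Rt loop adj t1 *m y^T)%R = 0%R.
    by apply: P21 => x Cx; apply: O23.
  by split => // x Cx; apply: O12.
Qed.
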